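(* Consider any fair, well-formed execution of COP as described in the context (with $S$ correct or Byzantine), and for each client $C_i$ let $\pi_i$ be the sequence defined in the context. For any clients $C_i,C_j$ and any operation $o\in\pi_i\cap\pi_j$, we have $\pi_i|^o=\pi_j|^o$, where $\pi|^o$ denotes the prefix of $\pi$ ending with $o$.
   Context: System model. Clients $C_1,\dots,C_n$ and server $S$ in an asynchronous system, each client connected to $S$ by a reliable FIFO channel; clients are correct; $S$ is correct or Byzantine (may send arbitrary messages). Executions are fair and well-formed. Functionality. $F$ is deterministic over states $\mathcal{S}$, operations $\mathcal{O}$, responses $\mathcal{R}$: $F(s,o)=(s',r)$, extended to sequences by applying operations in order. $\mathrm{commute}_F(s,\rho_1,\rho_2)$ is true iff every interleaving of sequences $\rho_1,\rho_2$ (preserving each one's internal order) executed from $s$ yields the same final state and the same respective responses. Cryptography (ideal). $\mathrm{hash}$ is ideal collision-free; $\mathrm{sign}_i$ is invocable only by $C_i$ and $\mathrm{verify}_i(\phi,m)$ is true iff $C_i$ previously executed $\mathrm{sign}_i(m)$ obtaining $\phi$. $\|$ is concatenation. COP client $C_i$. State: $u$ (initially $\bot$); $c$ (initially $0$); map $H$ with $H[0]=\mathrm{null}$; map $Z$ to $\{\mathrm{success},\mathrm{abort}\}$; state $s$ (initially $s_0$). (1) On invocation of $o$: $u\leftarrow o$, send $\langle\mathrm{invoke},o,c,\mathrm{sign}_i(\mathrm{invoke}\|o\|i)\rangle$ to $S$. (2) On $\langle\mathrm{reply},\omega\rangle$: $\gamma,\mu\leftarrow\langle\rangle$. For $k=1,\dots,\mathrm{length}(\omega)$: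 $(o,j,\tau)=\omega[k]$, $l=c+k$; halt if $\mathrm{verify}_j(\tau,\mathrm{invoke}\|o\|j)$ fails; if $H[l]$ undefined set $H[l]\leftarrow\mathrm{hash}(H[l-1]\|o\|l\|j)$, else halt if $H[l]\neq\mathrm{hash}(H[l-1]\|o\|l\|j)$; if $j=i$ and $Z[l]=\mathrm{success}$ append $o$ to $\mu$, else if $j\neq i$ append $o$ to $\gamma$. Halt if $\omega$ is empty or its last entry has operation $\neq u$ or index $\neq i$. $(a,r)\leftarrow F(s,\mu)$. If $\mathrm{commute}_F(a,\langle u\rangle,\gamma)$: $(a,r)\leftarrow F(a,u)$, $Z[l]\leftarrow\mathrm{success}$; else $r\leftarrow\bot$, $Z[l]\leftarrow\mathrm{abort}$. Send $\langle\mathrm{commit},u,l,H[l],Z[l],\mathrm{sign}_i(\mathrm{commit}\|u\|l\|H[l]\|Z[l])\rangle$ to $S$, set $u\leftarrow\bot$, output $r$. (3) On $\langle\mathrm{broadcast},o,q,h,z,\phi,j\rangle$: halt unless $q=c+1$ and $\mathrm{verify}_j(\phi,\mathrm{commit}\|o\|q\|h\|z)$; if $H[q]$ undefined set $H[q]\leftarrow\mathrm{hash}(H[q-1]\|o\|q\|j)$; halt if $h\neq H[q]$; if $z=\mathrm{success}$, $(s,\cdot)\leftarrow F(s,o)$; $c\leftarrow c+1$. COP server $S$ (when correct). State $t=0$, $b=0$, maps $I,O$ empty. On $\langle\mathrm{invoke},o,c,\tau\rangle$ from $C_i$: $t\leftarrow t+1$, $I[t]\leftarrow(o,i,\tau)$,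 send $\langle\mathrm{reply},\langle I[c+1],\dots,I[t]\rangle\rangle$ to $C_i$. On $\langle\mathrm{commit},o,q,h,z,\phi\rangle$ from $C_i$: $O[q]\leftarrow(o,h,z,\phi,i)$; while $O[b+1]$ defined: $b\leftarrow b+1$, send $\langle\mathrm{broadcast},o',b,h',z',\phi',j\rangle$ to all clients where $(o',h',z',\phi',j)=O[b]$. Terminology. $C_i$ commits $o$ when it issues the commit signature in step (2); the value $l$ there is the sequence number of $o$. A client confirms $o$ when it processes a broadcast message for $o$ in step (3) passing all checks. Definition of $\pi_i$: let $o$ be the operation committed by $C_i$ with the highest sequence number among those operations of $C_i$ that have been confirmed by some client $C_k$ (possibly $C_k=C_i$); let $\alpha_i$ be the sequence of operations confirmed by $C_k$ up to and including $o$; let $\beta_i$ be the sequence of operations committed by $C_i$ with sequence number higher than that of $o$, in order of sequence number; $\pi_i=\alpha_i\circ\beta_i$ (concatenation). *)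

(* Defs.v *)
From HB Require Import structures.
From Stdlib Require Import ClassicalEpsilon.
From mathcomp Require Import all_boot.
Set Implicit Arguments.
Unset Strict Implicit.
Unset Printing Implicit Defensive.

Definition pdec (P : Prop) : bool :=
  if excluded_middle_informative P then true else false.

Section COP.
Variables (St : Type) (O : eqType) (Rsp : Type) (F : St -> O -> St * Rsp)
          (s0 : St) (n : nat).

Fixpoint Fseq (s : St) (rho : seq O) : St * seq Rsp :=
  match rho with
  | [::] => (s, [::])
  | o :: r => let (s1, x) := F s o in
              let (sf, xs) := Fseq s1 r in (sf, x :: xs)
  end.

(* Running a tagged interleaving (tag true = from rho1, false = from rho2). *)
Fixpoint runT (s : St) (w : seq (bool * O)) : St * seq (bool * Rsp) :=
  match w with
  | [::] => (s, [::])
  | (b, o) :: w' => let (s1, x) := F s o in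
                    let (sf, xs) := runT s1 w' in (sf, (b, x) :: xs)
  end.

Definition interleaving (w : seq (bool * O)) (r1 r2 : seq O) : Prop :=
  [seq x.2 | x <- w & x.1] = r1 /\ [seq x.2 | x <- w & ~~ x.1] = r2.

Definition resps (b : bool) (rs : seq (bool * Rsp)) : seq Rsp :=
  [seq x.2 | x <- rs & x.1 == b].

Definition commuteF (s : St) (r1 r2 : seq O) : Prop :=
  forall w w', interleaving w r1 r2 -> interleaving w' r1 r2 ->
    (runT s w).1 = (runT s w').1 /\
    resps true (runT s w).2 = resps true (runT s w').2 /\
    resps false (runT s w).2 = resps false (runT s w').2.

(* Ideal collision-free hash: hash(h || o || l || j) is a free term. *)
Inductive hval : Type := HNull | HNode of hval & O & nat & nat.
Inductive zval : Type := Zsucc | Zabort.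
(* Signed messages: invoke||o||i  and  commit||o||l||h||z *)
Inductive smsg : Type := SInv of O & nat | SCom of O & nat & hval & zval.
(* Ideal signatures: sign_i(m) = (i, m); the log records all signatures made. *)
Definition sigv := (nat * smsg)%type.
Definition verify (log : seq sigv) (j : nat) (phi : sigv) (m : smsg) : Prop :=
  phi = (j, m) /\ List.In (j, m) log.

Record cstate := CState {
  cu : option O; cc : nat; cH : nat -> option hval; cZ : nat -> option zval;
  cs : St; chalt : bool }.

Definition cinit : cstate :=
  CState None 0 (fun l => if l == 0 then Some HNull else None) (fun _ => None) s0 false.

Definition upd (T : Type) (f : nat -> T) (l : nat) (v : T) : nat -> T :=
  fun l' => if l' == l then v else f l'.

(* Global state: client states + ghost logs (signatures issued, operations
   invoked, commits (o,l) per client in issue order, confirmations per client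
   in order). *)
Record gstate := GState {
  gcl : nat -> cstate; glog : seq sigv; ginv : seq O;
  gcom : nat -> seq (O * nat); gconf : nat -> seq O }.

Definition ginit : gstate :=
  GState (fun _ => cinit) [::] [::] (fun _ => [::]) (fun _ => [::]).

Definition set_client (g : gstate) (i : nat) (C : cstate) : gstate :=
  GState (upd (gcl g) i C) (glog g) (ginv g) (gcom g) (gconf g).

Definition halted (C : cstate) : cstate :=
  CState (cu C) (cc C) (cH C) (cZ C) (cs C) true.

Definition halt (g : gstate) (i : nat) : gstate := set_client g i (halted (gcl g i)).

(* The loop of step (2); None = halt.  (H[l-1] undefined is unreachable.) *)
Fixpoint scan (i : nat) (log : seq sigv) (H : nat -> option hval)
  (Z : nat -> option zval) (l : nat) (om : seq (O * nat * sigv))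
  (gam mu : seq O) : option ((nat -> option hval) * seq O * seq O) :=
  match om with
  | [::] => Some (H, gam, mu)
  | ((o, j), tau) :: om' =>
    if ~~ pdec (verify log j tau (SInv o j)) then None else
    match H l.-1 with
    | None => None
    | Some hp =>
      let h := HNode hp o l j in
      let H'opt := match H l with
                   | None => Some (upd H l (Some h))
                   | Some hl => if pdec (hl = h) then Some H else None
                   end in
      match H'opt with
      | None => None
      | Some H' =>
        let gm := if (j == i) && pdec (Z l = Some Zsucc) then (gam, rcons mu o)
                  else if j != i then (rcons gam o, mu) else (gam, mu) in
        scan i log H' Z l.+1 om' gm.1 gm.2
      end
    end
  end.

Definition on_reply (i : nat) (om : seq (O * nat * sigv)) (g : gstate) : gstate :=
  let C := gcl g i in
  match scan i (glog g) (cH C) (cZ C) (cc C).+1 om [::] [::] with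
  | None => halt g i
  | Some (H, gam, mu) =>
    match rev om with
    | [::] => halt g i
    | ((ol, jl), _) :: _ =>
      match cu C with
      | None => halt g i
      | Some u =>
        if (ol != u) || (jl != i) then halt g i else
        let l := cc C + size om in
        let a := (Fseq (cs C) mu).1 in
        let z := if pdec (commuteF a [:: u] gam) then Zsucc else Zabort in
        match H l with
        | None => halt g i (* unreachable *)
        | Some hl =>
          GState (upd (gcl g) i (CState None (cc C) H (upd (cZ C) l (Some z)) (cs C) false))
                 (rcons (glog g) (i, SCom u l hl z)) (ginv g)
                 (upd (gcom g) i (rcons (gcom g i) (u, l))) (gconf g)
        end
      end
    end
  end.

Definition on_bcast (i : nat) (o : O) (q : nat) (h : hval) (z : zval)
  (phi : sigv) (j : nat) (g : gstate) : gstate :=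
  let C := gcl g i in
  if ~~ ((q == (cc C).+1) && pdec (verify (glog g) j phi (SCom o q h z)))
  then halt g i else
  let Hopt := match cH C q with
              | Some _ => Some (cH C)
              | None => match cH C q.-1 with
                        | Some hp => Some (upd (cH C) q (Some (HNode hp o q j)))
                        | None => None (* unreachable *)
                        end
              end in
  match Hopt with
  | None => halt g i
  | Some H =>
    if ~~ pdec (H q = Some h) then halt g i else
    let s' := match z with Zsucc => (F (cs C) o).1 | Zabort => cs C end in
    GState (upd (gcl g) i (CState (cu C) (cc C).+1 H (cZ C) s' false))
           (glog g) (ginv g) (gcom g) (upd (gconf g) i (rcons (gconf g i) o))
  end.

(* Clients 0..n-1 are correct; the server is arbitrary
   (Byzantine), so any message may be delivered to any client at any time;
   a correct server is a special case.  Well-formedness: a client invokes only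
   when it has no pending operation; operations are unique (never invoked
   twice). *)
Inductive step : gstate -> gstate -> Prop :=
| StInvoke g i o : i < n -> ~~ chalt (gcl g i) -> cu (gcl g i) = None ->
    o \notin ginv g ->
    step g (GState (upd (gcl g) i
                      (CState (Some o) (cc (gcl g i)) (cH (gcl g i)) (cZ (gcl g i))
                              (cs (gcl g i)) false))
                   (rcons (glog g) (i, SInv o i)) (rcons (ginv g) o)
                   (gcom g) (gconf g))
| StReply g i om : i < n -> ~~ chalt (gcl g i) -> step g (on_reply i om g)
| StBcast g i o q h z phi j : i < n -> ~~ chalt (gcl g i) ->
    step g (on_bcast i o q h z phi j g).

(* States reached by finite executions (prefixes of executions). *)
Inductive reach : gstate -> Prop :=
| reach0 : reach ginit
| reachS g g' : reach g -> step g g' -> reach g'.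

Definition sortl (s : seq (O * nat)) : seq (O * nat) :=
  sort (fun x y : O * nat => x.2 <= y.2) s.

Definition conf_by_some (g : gstate) (o : O) : Prop :=
  exists k, k < n /\ o \in gconf g k.

Definition IsPi (g : gstate) (i : nat) (pi : seq O) : Prop :=
  ((forall x, x \in gcom g i -> ~ conf_by_some g x.1) /\
     pi = map fst (sortl (gcom g i)))
  \/
  (exists (o : O) (l k : nat),
     (o, l) \in gcom g i /\ k < n /\ o \in gconf g k /\
     (forall x, x \in gcom g i -> conf_by_some g x.1 -> x.2 <= l) /\
     pi = take (index o (gconf g k)).+1 (gconf g k)
          ++ map fst (sortl [seq x <- gcom g i | l < x.2])).

End COP.

(* pi|^o : prefix of pi ending with (the first occurrence of) o. *)
Definition prefix_upto (O : eqType) (o : O) (pi : seq O) : seq O :=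
  take (index o pi).+1 pi.

(* Main.v *)
Require Import Defs.
From HB Require Import structures.
From Stdlib Require Import ClassicalEpsilon.
From mathcomp Require Import all_boot.
Set Implicit Arguments.
Unset Strict Implicit.
Unset Printing Implicit Defensive.

Lemma pdecP (P : Prop) : pdec P = true <-> P.
Proof.
rewrite /pdec; case: excluded_middle_informative => H; split => //.

Qed.

Lemma In_rcons (T : Type) (l : seq T) a x : List.In x (rcons l a) <-> List.In x l \/ x = a.
Proof.
elim: l => [|b l IH] /=; first by split; [case=> // ->; right | case=> // ->; left].
rewrite IH; tauto.
Qed.

Section Inv.
Variables (St : Type) (O : eqType) (Rsp : Type) (F : St -> O -> St * Rsp)
          (s0 : St) (n : nat).

Fixpoint opsof (h : hval O) : seq O :=
  match h with HNull => [::] | HNode hp o _ _ => rcons (opsof hp) o end.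

Definition chainH (H : nat -> option (hval O)) := forall q h, H q.+1 = Some h ->
  exists hp o j, h = HNode hp o q.+1 j /\ H q = Some hp.
Definition extH (H H' : nat -> option (hval O)) :=
  forall q h, H q = Some h -> H' q = Some h.

Lemma scan_spec i log Z (om : seq (O * nat * sigv O)) :
  forall H l gam mu H' gam' mu',
  scan i log H Z l om gam mu = Some (H', gam', mu') -> 0 < l -> chainH H ->
  [/\ extH H H', chainH H' & forall x0 k, k < size om -> exists hp,
     H' (l + k) = Some (HNode hp (nth x0 om k).1.1 (l + k) (nth x0 om k).1.2)].
Proof.
elim: om => [|[[o j] tau] om IH] H l gam mu H' gam' mu' /=.
  by case=> <- _ _ _ ch; split.
case: pdec => //=.
case Hl1: (H l.-1) => [hp|] //.
move=> E l0 ch.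
have key : forall H1, extH H H1 -> chainH H1 -> H1 l = Some (HNode hp o l j) ->
   scan i log H1 Z l.+1 om
     (if (j == i) && pdec (Z l = Some Zsucc) then (gam, rcons mu o)
      else if j != i then (rcons gam o, mu) else (gam, mu)).1
     (if (j == i) && pdec (Z l = Some Zsucc) then (gam, rcons mu o)
      else if j != i then (rcons gam o, mu) else (gam, mu)).2 = Some (H', gam', mu') ->
   [/\ extH H H', chainH H' & forall x0 k, k < (size om).+1 -> exists hp,
     H' (l + k) = Some (HNode hp (nth x0 (((o, j), tau) :: om) k).1.1 (l + k)
                        (nth x0 (((o, j), tau) :: om) k).1.2)].
  move=> H1 e1 c1 h1 /IH [] // e2 c2 n2; split => //.
  - by move=> q h /e1 /e2.
  - move=> x0 [|k] /=; first by rewrite addn0; exists hp; apply: e2.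
    by rewrite ltnS => /(n2 x0); rewrite addSnnS.
case Hl: (H l) E => [hl|].
  case E: (pdec _) => //; move/pdecP: E => E; subst hl.
  by apply: key.
apply: key.
- by move=> q h; rewrite /upd; case: eqP => // ->; rewrite Hl.
- move=> q h; rewrite /upd; case: (eqVneq q.+1 l) => [El|nq].
    move=> [<-]; exists hp, o, j; split; first by rewrite El.
    by rewrite -El ltn_eqF // -Hl1 -El.
  move=> /ch [hp' [o' [j' [-> Hq]]]]; exists hp', o', j'; split => //.
  by case: eqP => // eq; rewrite eq Hl in Hq.
- by rewrite /upd eqxx.
Qed.

Record Inv (g : gstate St O) : Prop := {
 i_chain : forall k, chainH (cH (gcl g k));
 i_cc : forall k, exists hc, cH (gcl g k) (cc (gcl g k)) = Some hc /\ opsof hc = gconf g k;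
 i_size : forall k, size (gconf g k) = cc (gcl g k);
 i_sig : forall c o l h z, List.In (c, SCom o l h z) (glog g) ->
    cH (gcl g c) l = Some h /\ (exists hp, h = HNode hp o l c) /\ o \in ginv g;
 i_uniq : forall c o l h z c' l' h' z', List.In (c, SCom o l h z) (glog g) ->
    List.In (c', SCom o l' h' z') (glog g) -> [/\ c = c', l = l' & h = h'];
 i_cu : forall c u, cu (gcl g c) = Some u -> [/\ u \in ginv g,
    (forall c' l h z, ~ List.In (c', SCom u l h z) (glog g)) &
    (forall c', cu (gcl g c') = Some u -> c' = c)];
 i_com : forall i x, x \in gcom g i -> exists h z, List.In (i, SCom x.1 x.2 h z) (glog g);
 i_conf : forall k p x0, p < size (gconf g k) -> exists c h z,
    List.In (c, SCom (nth x0 (gconf g k) p) p.+1 h z) (glog g) /\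
    take p.+1 (gconf g k) = opsof h
}.

Lemma Inv_init : Inv (@ginit St O s0).
Proof.
constructor => //=.
all: try by move=> k; exists (HNull O).
all: try by move=> k [].
all: try by move=> k q h.
Qed.

Lemma Inv_ext g g' : glog g' = glog g -> ginv g' = ginv g -> gcom g' = gcom g ->
  gconf g' = gconf g ->
  (forall k, [/\ cH (gcl g' k) = cH (gcl g k), cc (gcl g' k) = cc (gcl g k)
             & cu (gcl g' k) = cu (gcl g k)]) -> Inv g -> Inv g'.
Proof.
move=> E1 E2 E3 E4 E [a b c d e f h i]; constructor; rewrite ?E1 ?E2 ?E3 ?E4.
- by move=> k; case: (E k) => -> _ _.
- by move=> k; case: (E k) => -> -> _.
- by move=> k; case: (E k) => _ -> _.
- move=> c0 o l h0 z H; case: (E c0) => -> _ _; exact: (d _ _ _ _ _ H).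
- exact: e.
- move=> c0 u; case: (E c0) => _ _ ->; case/f => ? ? H; split => // c' .
  by case: (E c') => _ _ ->; apply: H.
- exact: h.
- exact: i.
Qed.

Lemma Inv_halt g k : Inv g -> Inv (halt g k).
Proof.
apply: Inv_ext => // k'; rewrite /halt /set_client /upd /=.
by case: eqP => // ->.
Qed.

Lemma In_rconsSInv (l : seq (sigv O)) x c o l0 h z :
  List.In (c, SCom o l0 h z) (rcons l x) -> x.2 = SInv o x.1 \/ (exists o', x.2 = SInv o' x.1) ->
  List.In (c, SCom o l0 h z) l.
Proof. move/In_rcons => [//|E]; rewrite -E /=; by case=> [|[o' ?]]. Qed.

Lemma Inv_invoke g i o : Inv g -> cu (gcl g i) = None -> o \notin ginv g ->
  Inv (GState (upd (gcl g) i (CState (Some o) (cc (gcl g i)) (cH (gcl g i))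
                   (cZ (gcl g i)) (cs (gcl g i)) false))
              (rcons (glog g) (i, SInv o i)) (rcons (ginv g) o) (gcom g) (gconf g)).
Proof.
move=> [a b c d e f h k] cu0 onew.
have inlog : forall c0 o0 l0 h0 z0, List.In (c0, SCom o0 l0 h0 z0) (rcons (glog g) (i, SInv o i)) ->
   List.In (c0, SCom o0 l0 h0 z0) (glog g).
  move=> *; apply: In_rconsSInv; first eassumption; right; exists o; reflexivity.
have Eh : forall k, cH (upd (gcl g) i (CState (Some o) (cc (gcl g i)) (cH (gcl g i))
                   (cZ (gcl g i)) (cs (gcl g i)) false) k) = cH (gcl g k).
  by move=> k'; rewrite /upd; case: eqP => // ->.
have Ec : forall k, cc (upd (gcl g) i (CState (Some o) (cc (gcl g i)) (cH (gcl g i))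
                   (cZ (gcl g i)) (cs (gcl g i)) false) k) = cc (gcl g k).
  by move=> k'; rewrite /upd; case: eqP => // ->.
constructor => /=.
- by move=> k'; rewrite Eh.
- by move=> k'; rewrite Eh Ec.
- by move=> k'; rewrite Ec.
- move=> c0 o0 l0 h0 z0 /inlog /d [H1 [H2 H3]]; rewrite Eh; split => //; split => //.
  by rewrite mem_rcons inE H3 orbT.
- by move=> c0 o0 l0 h0 z0 c' l' h' z' /inlog H1 /inlog H2; apply: e H1 H2.
- move=> c0 u; rewrite {1}/upd; case: eqP => [->|nc].
    move=> /= [<-]; split; first by rewrite mem_rcons mem_head.
    + move=> c' l0 h0 z0 /inlog /d [_ [_ H3]]; by rewrite H3 in onew.
    + move=> c'; rewrite /upd; case: eqP => // _ /f [H3 _ _]; by rewrite H3 in onew.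
  move=> /f [H1 H2 H3]; split; first by rewrite mem_rcons inE H1 orbT.
  + by move=> c' l0 h0 z0 /inlog /H2.
  + move=> c'; rewrite /upd; case: eqP => [_ /= [E]|_ /H3 //].
    by rewrite E H1 in onew.
- move=> i0 x /h [h0 [z0 H]]; exists h0, z0; by apply/In_rcons; left.
- move=> k' p x0 /(k k' p x0) [c0 [h0 [z0 [H1 H2]]]]; exists c0, h0, z0; split => //.
  by apply/In_rcons; left.
Qed.

Lemma Inv_reply g i om : Inv g -> Inv (on_reply F i om g).
Proof.
move=> I; rewrite /on_reply.
case Esc: (scan _ _ _ _ _ _ _ _) => [[[H gam] mu]|]; last exact: Inv_halt.
case Erev: (rev om) => [|[[ol jl] t] r]; first exact: Inv_halt.
case Ecu: (cu (gcl g i)) => [u|]; last exact: Inv_halt.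
case: ifP => [_|/norP [/negbNE/eqP Eo /negbNE/eqP Ej]]; first exact: Inv_halt.
subst ol jl.
have [a b c d e f h k] := I.
have [ext ch nth] := scan_spec Esc (ltn0Sn _) (a i).
have Eom : om = rcons (rev r) ((u, i), t) by rewrite -(revK om) Erev rev_cons.
have El : (cc (gcl g i)).+1 + size r = cc (gcl g i) + size om
  by rewrite Eom size_rcons size_rev addSnnS.
case Hl: (H _) => [hl|]; last exact: Inv_halt.
have [hp Ehl] : exists hp, hl = HNode hp u (cc (gcl g i) + size om) i.
  have := nth ((u,i),t) (size r); rewrite {1}Eom size_rcons size_rev ltnSn => /(_ isT) [hp].
  rewrite {1}Eom nth_rcons size_rev ltnn eqxx /= El Hl => -[->]; rewrite Eom nth_rcons size_rev ltnn eqxx; by exists hp.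
move: (if pdec _ then _ else _) => z.
set l := cc (gcl g i) + size om in Hl Ehl *.
set C' := CState _ _ _ _ _ _.
have Eh : forall k, cH (upd (gcl g) i C' k) = if k == i then H else cH (gcl g k).
  by move=> k'; rewrite /upd; case: eqP.
have Ec : forall k, cc (upd (gcl g) i C' k) = cc (gcl g k).
  by move=> k'; rewrite /upd; case: eqP => // ->.
have Eu : forall k, cu (upd (gcl g) i C' k) = if k == i then None else cu (gcl g k).
  by move=> k'; rewrite /upd; case: eqP.
have [ginvu nou uniqu] := f i u Ecu.
constructor => /=.
- by move=> k'; rewrite Eh; case: eqP => _; [exact: ch | exact: a].
- move=> k'; rewrite Eh Ec; case: eqP => [->|_] //.
  by have [hc [H1 H2]] := b i; exists hc; split => //; apply: ext.
- by move=> k'; rewrite Ec.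
- move=> c0 o0 l0 h0 z0 /In_rcons [/d [H1 [H2 H3]]|].
    by rewrite Eh; split => //; case: eqP => [E|//]; apply: ext; rewrite -E.
  case=> -> -> -> -> _; rewrite Eh eqxx; split => //; split => //; by exists hp.
- move=> c0 o0 l0 h0 z0 c' l' h' z' /In_rcons [H1|E1] /In_rcons [H2|E2].
  + exact: e H1 H2.
  + by case: E2 => _ E _ _ _; rewrite E in H1; case: (nou _ _ _ _ H1).
  + by case: E1 => _ E _ _ _; rewrite E in H2; case: (nou _ _ _ _ H2).
  + by move: E1 E2 => [-> -> -> -> _] [-> -> -> _].
- move=> c0 u'; rewrite Eu; case: eqP => // nc Hc; have [H1 H2 H3] := f _ _ Hc.
  split => //.
  + move=> c' l0 h0 z0 /In_rcons [/H2 []|[_ E _ _ _]].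
    by subst u'; case: nc; apply: uniqu.
  + by move=> c'; rewrite Eu; case: eqP => // _ /H3.
- move=> i0 x; rewrite /upd; case: eqP => [->|_].
    rewrite mem_rcons inE => /orP [/eqP ->|/h [h0 [z0 H1]]].
      by exists hl, z; apply/In_rcons; right.
    by exists h0, z0; apply/In_rcons; left.
  by move=> /h [h0 [z0 H1]]; exists h0, z0; apply/In_rcons; left.
- move=> k' p x0 /(k k' p x0) [c0 [h0 [z0 [H1 H2]]]]; exists c0, h0, z0; split => //.
  by apply/In_rcons; left.
Qed.

Lemma Inv_bcast g i o q h z phi j : Inv g -> Inv (on_bcast F i o q h z phi j g).
Proof.
move=> I; rewrite /on_bcast.
case: ifP => [_|]; first exact: Inv_halt.
move/negbFE/andP => [/eqP Eq /pdecP [_ Hin]].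
have [a b c d e f hh k] := I.
have key : forall H s', extH (cH (gcl g i)) H -> chainH H ->
  Inv (if ~~ pdec (H q = Some h) then halt g i else
       GState (upd (gcl g) i (CState (cu (gcl g i)) (cc (gcl g i)).+1 H (cZ (gcl g i)) s' false))
              (glog g) (ginv g) (gcom g) (upd (gconf g) i (rcons (gconf g i) o))).
  move=> H s' ext ch.
  case E: (pdec _) => /=; last exact: Inv_halt.
  move/pdecP: E => Hq.
  have [_ [[hp' Eh'] _]] := d _ _ _ _ _ Hin.
  have [hc [Hc Hops]] := b i.
  have [hp'' [o' [j' [Eh'' Hcc]]]] := ch _ _ (etrans (congr1 H (esym Eq)) Hq).
  rewrite (ext _ _ Hc) in Hcc; case: Hcc => Ehc; subst hp''.
  have Eops : opsof h = rcons (gconf g i) o.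
    by rewrite Eh'; rewrite Eh' in Eh''; case: Eh'' => -> _ _ _; rewrite /= Hops.
  set C' := CState _ _ _ _ _ _.
  have Eh : forall k, cH (upd (gcl g) i C' k) = if k == i then H else cH (gcl g k).
    by move=> k'; rewrite /upd; case: eqP.
  have Ec : forall k, cc (upd (gcl g) i C' k) =
      if k == i then (cc (gcl g i)).+1 else cc (gcl g k).
    by move=> k'; rewrite /upd; case: eqP.
  have Eu : forall k, cu (upd (gcl g) i C' k) = cu (gcl g k).
    by move=> k'; rewrite /upd; case: eqP => // ->.
  constructor => /=.
  - by move=> k'; rewrite Eh; case: eqP => _; [exact: ch | exact: a].
  - move=> k'; rewrite Eh Ec /upd; case: eqP => _ //.
    by exists h; rewrite -Eq Hq Eops.
  - by move=> k'; rewrite Ec /upd; case: eqP => _ //; rewrite size_rcons c.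
  - move=> c0 o0 l0 h0 z0 /d [H1 H2]; rewrite Eh; split => //.
    by case: eqP => [E|//]; apply: ext; rewrite -E.
  - exact: e.
  - move=> c0 u; rewrite Eu => /f [H1 H2 H3]; split => // c'; rewrite Eu; exact: H3.
  - exact: hh.
  - move=> k' p x0; rewrite /upd; case: eqP => [_|_] /=; last exact: k.
    rewrite size_rcons ltnS leq_eqVlt => /orP [/eqP Ep|Hp].
      exists j, h, z; rewrite Ep nth_rcons ltnn eqxx c -Eq; split => //.
      by rewrite take_oversize ?size_rcons ?c ?Eq.
    have [c0 [h0 [z0 [H1 H2]]]] := k i p x0 Hp.
    exists c0, h0, z0; rewrite nth_rcons Hp -cats1 takel_cat //.
case Eq1: (cH (gcl g i) q) => [hq|].
  by apply: key => //; apply: a.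
case Eq2: (cH (gcl g i) q.-1) => [hp|]; last exact: Inv_halt.
apply: key.
- by move=> q' h'; rewrite /upd; case: eqP => // ->; rewrite Eq1.
- move=> q' h'; rewrite /upd; case: (eqVneq q'.+1 q) => [El|nq].
    move=> [<-]; exists hp, o, j; split; first by rewrite El.
    by rewrite -El ltn_eqF // -Eq2 -El.
  move=> /(a i) [hp' [o' [j' [-> Hq]]]]; exists hp', o', j'; split => //.
  by case: eqP => // eq; rewrite eq Eq1 in Hq.
Qed.

Lemma Inv_reach g : reach F s0 n g -> Inv g.
Proof.
elim => [|g1 g2 _ IH st]; first exact: Inv_init.
destruct st.
- exact: Inv_invoke.
- exact: Inv_reply.
- exact: Inv_bcast.
Qed.

Lemma L1 g k o : Inv g -> o \in gconf g k -> exists c h z,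
  List.In (c, SCom o (index o (gconf g k)).+1 h z) (glog g) /\
  prefix_upto o (gconf g k) = opsof h.
Proof.
move=> I oin; have := @i_conf _ I k (index o (gconf g k)) o; rewrite index_mem => /(_ oin).
by rewrite nth_index.
Qed.

Lemma L3 g k k' o : Inv g -> o \in gconf g k -> o \in gconf g k' ->
  prefix_upto o (gconf g k) = prefix_upto o (gconf g k').
Proof.
move=> I /(L1 I) [c [h [z [H1 ->]]]] /(L1 I) [c' [h' [z' [H2 ->]]]].
by have [_ _ ->] := i_uniq I H1 H2.
Qed.

Lemma L4 g i i' o l l' : Inv g -> (o, l) \in gcom g i -> (o, l') \in gcom g i' -> i = i'.
Proof.
move=> I /(i_com I) [h [z H1]] /(i_com I) [h' [z' H2]].
by have [-> _ _] := i_uniq I H1 H2.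
Qed.

Lemma L5 g i o o' l : Inv g -> (o, l) \in gcom g i -> (o', l) \in gcom g i -> o = o'.
Proof.
move=> I /(i_com I) [h [z /(i_sig I) [H1 [[hp E1] _]]]]
         /(i_com I) [h' [z' /(i_sig I) [H2 [[hp' E2] _]]]].
move: H1; rewrite H2 => -[E]; subst h'.
by move: E; rewrite E1 => -[_ ->].
Qed.

Lemma IsPi_unique g i p1 p2 : Inv g -> IsPi n g i p1 -> IsPi n g i p2 -> p1 = p2.
Proof.
move=> I [[N1 ->]|[a1 [l1 [k1 [C1 [k1n [A1 [M1 ->]]]]]]]]
          [[N2 ->]|[a2 [l2 [k2 [C2 [k2n [A2 [M2 ->]]]]]]]] //.
- by case: (N1 _ C2); exists k2.
- by case: (N2 _ C1); exists k1.
have El : l1 = l2.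
  apply/eqP; rewrite eqn_leq (M2 _ C1) ?(M1 _ C2) //; [by exists k2 | by exists k1].
subst l2; have Ea := L5 I C1 C2; subst a2.
by have := L3 I A1 A2; rewrite /prefix_upto => ->.
Qed.

Lemma prefix_in (o a : O) (G : seq O) : o \in prefix_upto a G ->
  prefix_upto o (prefix_upto a G) = prefix_upto o G.
Proof.
rewrite /prefix_upto => oin.
have Ei : index o (take (index a G).+1 G) = index o G.
  have := cat_take_drop (index a G).+1 G => E.
  by rewrite -{3}E index_cat oin.
by rewrite Ei take_takel // index_ltn.
Qed.

Lemma prefix_cat (o : O) A B : o \in A -> prefix_upto o (A ++ B) = prefix_upto o A.
Proof.
by move=> oin; rewrite /prefix_upto index_cat oin takel_cat // index_mem.
Qed.

Lemma pi_loc g i pi o : Inv g -> IsPi n g i pi -> o \in pi ->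
  (exists k, [/\ k < n, o \in gconf g k & prefix_upto o pi = prefix_upto o (gconf g k)])
  \/ (exists l, (o, l) \in gcom g i /\ ~ conf_by_some n g o).
Proof.
move=> I [[N1 ->]|[a [l [k [C [kn [A [M ->]]]]]]]].
  move=> /mapP [[o0 l0] xin /= ->]; right; exists l0; rewrite mem_sort in xin.
  by split => //; apply: (N1 _ xin).
rewrite mem_cat => /orP [oin|].
  left; exists k; split => //.
  - exact: mem_take oin.
  - by rewrite prefix_cat // prefix_in.
move=> /mapP [[o0 l0] xin /= ->]; right; exists l0.
move: xin; rewrite mem_sort mem_filter /= => /andP [lt xin]; split => //.
move=> cb; have := M _ xin cb; rewrite /=; by rewrite leqNgt lt.
Qed.
End Inv.

Theorem lemma6 (St : Type) (O : eqType) (Rsp : Type)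
  (F : St -> O -> St * Rsp) (s0 : St) (n : nat) (g : gstate St O) :
  reach F s0 n g ->
  forall (i j : nat), i < n -> j < n ->
  forall (pi pj : seq O), IsPi n g i pi -> IsPi n g j pj ->
  forall o : O, o \in pi -> o \in pj ->
  prefix_upto o pi = prefix_upto o pj.
Proof.
move=> R i j _ _ pi pj Pi Pj o oi oj.
have I := Inv_reach R.
case: (pi_loc I Pi oi) => [[k [kn A1 E1]]|[l [C1 N1]]];
case: (pi_loc I Pj oj) => [[k' [kn' A2 E2]]|[l' [C2 N2]]].
- by rewrite E1 E2 (L3 I A1 A2).
- by case: N2; exists k.
- by case: N1; exists k'.
- have Eij := L4 I C1 C2; subst j.
  by rewrite (IsPi_unique I Pi Pj).
Qed.
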